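(* For a category $\mathbb{X}$ with finite products, $\overline{\mathcal{D}}[\mathbb{X}]$ is a category, i.e. composition $\ast$ of pre-$\mathsf{D}$-sequences is associative and $i_\bullet$ is a two-sided unit.
   Context: Composition in diagrammatic order. $\mathsf{P}(A)=A\times A$, $\mathsf{P}(f)=f\times f$. A pre-$\mathsf{D}$-sequence $f_\bullet:A\to B$ is $(f_0,f_1,\dots)$ with $f_n:\mathsf{P}^n(A)\to B$. The tangent $\mathsf{T}(f_\bullet):\mathsf{P}(A)\to\mathsf{P}(B)$ is the pre-$\mathsf{D}$-sequence $\mathsf{T}(f_\bullet)_n=\langle\mathsf{P}^n(\pi_0)f_n,f_{n+1}\rangle$, with $\pi_0:\mathsf{P}(A)\to A$; $\mathsf{T}^n$ is its $n$-fold iterate, so $\mathsf{T}^n(f_\bullet)_0:\mathsf{P}^n(A)\to\mathsf{P}^n(B)$. $\overline{\mathcal{D}}[\mathbb{X}]$ has the objects of $\mathbb{X}$, pre-$\mathsf{D}$-sequences as maps, identity $i_\bullet:A\to A$ with $i_0=1_A$, $i_n=\pi_1\pi_1\cdots\pi_1:\mathsf{P}^n(A)\to A$ ($n$ projections), and composition $(f_\bullet\ast g_\bullet)_n=\mathsf{T}^n(f_\bullet)_0\,g_n$. *)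

(* Defs.v *)
Set Implicit Arguments.
Unset Strict Implicit.

(* A category; composition in DIAGRAMMATIC order: comp f g = "f then g". *)
Record Category := {
  ob : Type;
  hom : ob -> ob -> Type;
  comp : forall {A B C : ob}, hom A B -> hom B C -> hom A C;
  idm : forall A : ob, hom A A;
  comp_id_l : forall A B (f : hom A B), comp (idm A) f = f;
  comp_id_r : forall A B (f : hom A B), comp f (idm B) = f;
  comp_assoc : forall A B C D (f : hom A B) (g : hom B C) (h : hom C D),
      comp (comp f g) h = comp f (comp g h)
}.

Arguments comp {c A B C} _ _.
Arguments idm {c} A.

Record FPCategory := {
  cat :> Category;
  term : ob cat;
  bang : forall A : ob cat, hom A term;
  bang_uniq : forall A (f : hom A term), f = bang A;
  prodo : ob cat -> ob cat -> ob cat;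
  pi0 : forall A B, hom (prodo A B) A;
  pi1 : forall A B, hom (prodo A B) B;
  pair : forall {C A B}, hom C A -> hom C B -> hom C (prodo A B);
  pair_pi0 : forall C A B (f : hom C A) (g : hom C B), comp (pair f g) (pi0 A B) = f;
  pair_pi1 : forall C A B (f : hom C A) (g : hom C B), comp (pair f g) (pi1 A B) = g;
  pair_uniq : forall C A B (f : hom C A) (g : hom C B) (h : hom C (prodo A B)),
      comp h (pi0 A B) = f -> comp h (pi1 A B) = g -> h = pair f g
}.

Arguments pi0 {f0} A B.
Arguments pi1 {f0} A B.
Arguments pair {f0 C A B} _ _.
Arguments prodo {f0} _ _.

Section DSeq.
Variable X : FPCategory.

Definition Pob (A : ob X) : ob X := prodo A A.
Definition Pmap {A B : ob X} (f : hom A B) : hom (Pob A) (Pob B) :=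
  pair (comp (pi0 A A) f) (comp (pi1 A A) f).

Fixpoint Pn (n : nat) (A : ob X) : ob X :=
  match n with 0 => A | S m => Pn m (Pob A) end.
Fixpoint Pnmap (n : nat) {A B : ob X} : hom A B -> hom (Pn n A) (Pn n B) :=
  match n with 0 => fun f => f | S m => fun f => Pnmap m (Pmap f) end.

Definition preD (A B : ob X) : Type := forall n : nat, hom (Pn n A) B.

Definition Tan {A B : ob X} (f : preD A B) : preD (Pob A) (Pob B) :=
  fun n => pair (comp (Pnmap n (pi0 A A)) (f n)) (f (S n)).

Fixpoint Tn (n : nat) {A B : ob X} (f : preD A B) : preD (Pn n A) (Pn n B) :=
  match n with 0 => f | S m => Tn m (Tan f) end.

(* identity i_0 = 1_A, i_n = pi1 pi1 ... pi1 (n projections, diagrammatic);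
   recursively i_{n+1}^A = i_n^{PA} ; pi1_A *)
Fixpoint idD_n (n : nat) (A : ob X) : hom (Pn n A) A :=
  match n with 0 => idm A | S m => comp (idD_n m (Pob A)) (pi1 A A) end.
Definition idD (A : ob X) : preD A A := fun n => idD_n n A.

Definition compD {A B C : ob X} (f : preD A B) (g : preD B C) : preD A C :=
  fun n => comp (Tn n f 0) (g n).

End DSeq.

Arguments Pob {X} A.
Arguments Pn {X} n A.
Arguments preD {X} A B.
Arguments Tan {X A B} f.
Arguments Tn {X} n {A B} f.
Arguments idD {X} A.
Arguments compD {X A B C} f g.

(* Main.v *)
Require Import Defs.
Set Implicit Arguments.
Unset Strict Implicit.

Lemma comp_pair (X : FPCategory) (D C A B : ob X) (h : hom D C) (x : hom C A) (y : hom C B) :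
  comp h (pair x y) = pair (comp h x) (comp h y).
Proof.
  apply pair_uniq; rewrite comp_assoc; [rewrite pair_pi0 | rewrite pair_pi1]; reflexivity.
Qed.

Lemma Pmap_comp (X : FPCategory) (A B C : ob X) (x : hom A B) (y : hom B C) :
  Pmap (comp x y) = comp (Pmap x) (Pmap y).
Proof.
  unfold Pmap, Pob. rewrite comp_pair, <- !comp_assoc, pair_pi0, pair_pi1. reflexivity.
Qed.

Lemma Pmap_pi0 (X : FPCategory) (A B : ob X) (a : hom A B) :
  comp (Pmap a) (pi0 B B) = comp (pi0 A A) a.
Proof. unfold Pmap. apply pair_pi0. Qed.

Lemma Pmap_pi1 (X : FPCategory) (A B : ob X) (a : hom A B) :
  comp (Pmap a) (pi1 B B) = comp (pi1 A A) a.
Proof. unfold Pmap. apply pair_pi1. Qed.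

Lemma Pnmap_comp (X : FPCategory) (n : nat) : forall (A B C : ob X) (x : hom A B) (y : hom B C),
  Pnmap n (comp x y) = comp (Pnmap n x) (Pnmap n y).
Proof.
  induction n as [|n IH]; intros; simpl. reflexivity.
  rewrite Pmap_comp. apply IH.
Qed.

Lemma pair_Pmap (X : FPCategory) (C A B : ob X) (x y : hom C A) (b : hom A B) :
  comp (pair x y) (Pmap b) = pair (comp x b) (comp y b).
Proof.
  unfold Pmap, Pob. rewrite comp_pair, <- !comp_assoc, pair_pi0, pair_pi1. reflexivity.
Qed.

Definition Rel (X : FPCategory) (A' B' A B : ob X) (g : preD A' B') (f : preD A B)
  (a : hom A' A) (b : hom B' B) : Prop :=
  forall k, comp (g k) b = comp (Pnmap k a) (f k).

Lemma Rel_Tan (X : FPCategory) (A' B' A B : ob X) (g : preD A' B') (f : preD A B) a b :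
  Rel g f a b -> Rel (Tan g) (Tan f) (Pmap a) (Pmap b).
Proof.
  intros H k. unfold Tan.
  etransitivity. apply pair_Pmap. etransitivity. 2: symmetry; apply comp_pair. f_equal.
  - rewrite comp_assoc, H, <- !comp_assoc, <- !Pnmap_comp. f_equal. f_equal. symmetry. apply Pmap_pi0.
  - apply (H (S k)).
Qed.

Lemma Rel_Tn (X : FPCategory) (n : nat) : forall (A' B' A B : ob X) (g : preD A' B') (f : preD A B) a b,
  Rel g f a b -> Rel (Tn n g) (Tn n f) (Pnmap n a) (Pnmap n b).
Proof.
  induction n as [|n IH]; intros A' B' A B g f a b H; simpl. exact H.
  apply IH. apply Rel_Tan. exact H.
Qed.

Lemma Rel_base (X : FPCategory) (A B : ob X) (f : preD A B) :
  Rel (Tan f) f (pi0 A A) (pi0 B B).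
Proof. intro k. unfold Tan. apply pair_pi0. Qed.

Lemma nat_Tn (X : FPCategory) (n : nat) (A B : ob X) (f : preD A B) :
  comp (Tn n (Tan f) 0) (Pnmap n (pi0 B B)) = comp (Pnmap n (pi0 A A)) (Tn n f 0).
Proof. exact (Rel_Tn n (Rel_base f) 0). Qed.

Lemma Tan_ext (X : FPCategory) (A B : ob X) (f g : preD A B) :
  (forall k, f k = g k) -> forall k, Tan f k = Tan g k.
Proof. intros H k. unfold Tan. rewrite !H. reflexivity. Qed.

Lemma Tn_ext (X : FPCategory) (n : nat) : forall (A B : ob X) (f g : preD A B),
  (forall k, f k = g k) -> forall k, Tn n f k = Tn n g k.
Proof.
  induction n as [|n IH]; intros A B f g H k; simpl. apply H.
  apply IH. apply Tan_ext. exact H.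
Qed.

Lemma Tan_compD (X : FPCategory) (A B C : ob X) (f : preD A B) (g : preD B C) :
  forall k, Tan (compD f g) k = compD (Tan f) (Tan g) k.
Proof.
  intro k. unfold compD, Tan at 1 3. unfold Pob in *. rewrite comp_pair.
  f_equal. rewrite <- !comp_assoc. apply (f_equal (fun h => comp h (g k))). symmetry. exact (nat_Tn k f).
Qed.

Lemma Tn_compD (X : FPCategory) (n : nat) : forall (A B C : ob X) (f : preD A B) (g : preD B C),
  forall k, Tn n (compD f g) k = compD (Tn n f) (Tn n g) k.
Proof.
  induction n as [|n IH]; intros A B C f g k; simpl. reflexivity.
  rewrite (Tn_ext n (Tan_compD f g)). apply IH.
Qed.

Lemma idD_nat (X : FPCategory) (k : nat) : forall (A' A : ob X) (a : hom A' A),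
  comp (idD_n k A') a = comp (Pnmap k a) (idD_n k A).
Proof.
  induction k as [|k IH]; intros; simpl.
  rewrite comp_id_l, comp_id_r. reflexivity.
  rewrite comp_assoc.
  etransitivity. apply (f_equal (comp (idD_n k (Pob A')))). symmetry. apply Pmap_pi1.
  etransitivity. symmetry. apply comp_assoc.
  etransitivity. apply (f_equal (fun h => comp h (pi1 A A))). apply IH.
  apply comp_assoc.
Qed.

Lemma Tan_idD (X : FPCategory) (A : ob X) : forall k, Tan (idD A) k = idD (Pob A) k.
Proof.
  intro k. unfold Tan, idD. symmetry. apply pair_uniq.
  - apply idD_nat.
  - reflexivity.
Qed.

Lemma Tn_idD (X : FPCategory) (n : nat) : forall (A : ob X) k, Tn n (idD A) k = idD (Pn n A) k.
Proof.
  induction n as [|n IH]; intros A k; simpl. reflexivity.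
  rewrite (Tn_ext n (Tan_idD A)). apply IH.
Qed.

Lemma Tn_idD_r (X : FPCategory) (n : nat) : forall (A B : ob X) (f : preD A B),
  comp (Tn n f 0) (idD_n n B) = f n.
Proof.
  induction n as [|n IH]; intros A B f; simpl. apply comp_id_r.
  etransitivity. symmetry. apply comp_assoc.
  etransitivity. apply (f_equal (fun h => comp h (pi1 B B))). apply IH.
  unfold Tan. apply pair_pi1.
Qed.

Theorem proposition3p7 (X : FPCategory) :
  (forall (A B C D : ob X) (f : preD A B) (g : preD B C) (h : preD C D) (n : nat),
      compD (compD f g) h n = compD f (compD g h) n)
  /\ (forall (A B : ob X) (f : preD A B) (n : nat),
      compD (idD A) f n = f n /\ compD f (idD B) n = f n).
Proof.
  split.
  - intros. unfold compD at 1 3. rewrite Tn_compD. unfold compD. simpl.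
    apply comp_assoc.
  - intros. split.
    + unfold compD. rewrite Tn_idD. unfold idD. simpl. apply comp_id_l.
    + unfold compD, idD. apply Tn_idD_r.
Qed.
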